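(* Let $F\subsetneq K$ be fields of characteristic $0$, with $F$ a proper nonempty subfield of $K$. Let $q(x)=\sum_{j=0}^{m}b_j x^j\in F[x]$ be non-constant with $b_m\neq 0$, and let $p(x)=\sum_{k=0}^{n}a_k x^k\in K[x]$ with $a_n\neq 0$. If $p\circ q\in F[x]$, then $p\in F[x]$.
   Context: $F[x]$ denotes the set of polynomials with all coefficients in $F$. *)

(* Defs.v *)
From HB Require Import structures.
From mathcomp Require Import all_boot all_order all_algebra.
Set Implicit Arguments. Unset Strict Implicit. Unset Printing Implicit Defensive.

(* Main.v *)
Require Import Defs.
From HB Require Import structures.
From mathcomp Require Import all_boot all_order all_algebra.
Import GRing.Theory.
Local Open Scope ring_scope.

Lemma aux (K : fieldType) (F : divringClosed K) (q : {poly K})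
    (qF : q \is a polyOver F) (q_nonconst : (1 < size q)%N) n :
  forall p : {poly K}, (size p <= n)%N -> p \Po q \is a polyOver F ->
  p \is a polyOver F.
Proof.
elim: n => [|n IH] p.
  by rewrite leqn0 size_poly_eq0 => /eqP -> _; exact: rpred0.
move=> sp pqF.
have [->|pnz] := eqVneq p 0; first exact: rpred0.
have qnz : q != 0 by rewrite -size_poly_eq0; case: (size q) q_nonconst.
have lq : lead_coef q != 0 by rewrite lead_coef_eq0.
have lqF : lead_coef q \in F by rewrite lead_coefE; exact: (polyOverP qF).
have lpqF : lead_coef (p \Po q) \in F by rewrite lead_coefE; exact: (polyOverP pqF).
set c := lead_coef p.
have cF : c \in F.
  have -> : c = lead_coef (p \Po q) / lead_coef q ^+ (size p).-1.
    by rewrite lead_coef_comp // mulfK // expf_neq0.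
  by rewrite rpred_div // rpredX.
set p' := p - c *: 'X^((size p).-1).
have sp' : (size p' <= n)%N.
  have sp1 : ((size p).-1 <= n)%N by rewrite -ltnS; case: (size p) sp.
  apply: leq_trans sp1; apply/leq_sizeP => j hj.
  rewrite /p' coefB coefZ coefXn.
  case: (ltngtP j (size p).-1) hj => // [hj' _|-> _].
    rewrite mulr0 subr0; apply/(leq_sizeP _ j) => //.
    by move: hj'; case: (size p).
  by rewrite mulr1 /c lead_coefE subrr.
have p'F : p' \is a polyOver F.
  apply: IH sp' _.
  rewrite /p' comp_polyB comp_polyZ comp_Xn_poly.
  by rewrite rpredB // polyOverZ // rpredX.
have -> : p = p' + c *: 'X^((size p).-1) by rewrite /p' subrK.
by rewrite rpredD // polyOverZ // polyOverXn.
Qed.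

Theorem lemma12 (K : fieldType) (F : divringClosed K)
    (charK0 : [pchar K] =i pred0)
    (properF : exists x : K, x \notin F)
    (q p : {poly K})
    (qF : q \is a polyOver F) (q_nonconst : (1 < size q)%N)
    (p_nz : p != 0)
    (pqF : p \Po q \is a polyOver F) :
  p \is a polyOver F.
Proof. exact: (@aux K F q qF q_nonconst (size p) p (leqnn _) pqF). Qed.
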